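(* Let $n\ge1$. There exist constants $C>0$ and $\delta_0>0$ depending only on $n$ such that for every $0<\delta<\delta_0$ and every $Q\in SO(n,\mathbb C)\cap M_\delta$ there exists $U\in SO(n,\mathbb R)$ with $|Q-U|<C\delta$.
   Context: $|\cdot|$ is the operator norm. Writing $z=x+iy$ with $x,y$ real matrices, $M_\delta=\{z\in{\rm Mat}(n,\mathbb C):|y|<\delta|x|\}$. $SO(n,\mathbb C)$ is the group of complex matrices $Q$ with $QQ^T=I$, $\det Q=1$. *)

(* Defs.v *)
From HB Require Import structures.
From mathcomp Require Import all_boot all_order all_algebra.
From mathcomp Require Import classical_sets reals.
From mathcomp Require Import complex.
Set Implicit Arguments. Unset Strict Implicit. Unset Printing Implicit Defensive.
Import Order.TTheory GRing.Theory Num.Theory.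
Local Open Scope ring_scope.
Local Open Scope classical_set_scope.

Section Defs.
Variable R : realType.

Definition rvnorm n (v : 'cV[R]_n) : R :=
  Num.sqrt (\sum_i (v i 0) ^+ 2).

Definition cvnorm n (v : 'cV[R[i]]_n) : R :=
  Num.sqrt (\sum_i ((@complex.Re R (v i 0)) ^+ 2 + (@complex.Im R (v i 0)) ^+ 2)).

Definition ropnorm n (A : 'M[R]_n) : R :=
  sup [set rvnorm (A *m v) | v in [set v : 'cV[R]_n | rvnorm v <= 1]].

Definition copnorm n (A : 'M[R[i]]_n) : R :=
  sup [set cvnorm (A *m v) | v in [set v : 'cV[R[i]]_n | cvnorm v <= 1]].

Definition mxRe n (z : 'M[R[i]]_n) : 'M[R]_n := map_mx (@complex.Re R) z.
Definition mxIm n (z : 'M[R[i]]_n) : 'M[R]_n := map_mx (@complex.Im R) z.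

Definition mxC n (U : 'M[R]_n) : 'M[R[i]]_n := map_mx (fun r => (r%:C)%C) U.

Definition Mdelta n (delta : R) : set 'M[R[i]]_n :=
  [set z | ropnorm (mxIm z) < delta * ropnorm (mxRe z)].

Definition SOC n : set 'M[R[i]]_n :=
  [set Q | Q *m Q^T = 1%:M /\ \det Q = 1].
Definition SOR n : set 'M[R]_n :=
  [set U | U *m U^T = 1%:M /\ \det U = 1].

End Defs.

(* Main.v *)
Require Import Defs.
From HB Require Import structures.
From mathcomp Require Import all_boot all_order all_algebra.
From mathcomp Require Import classical_sets reals.
From mathcomp Require Import complex.
From mathcomp Require Import ring lra.
From mathcomp Require Import perm.
Import Order.TTheory GRing.Theory Num.Theory.
Local Open Scope ring_scope.
Local Open Scope classical_set_scope.
Set Implicit Arguments. Unset Strict Implicit. Unset Printing Implicit Defensive.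

Lemma sqrt_facts (R : rcfType) (e : R) : `|e| <= 1/4 ->
  let s := Num.sqrt (1 + e) in s * s = 1 + e /\ 1/2 <= s /\ `|s - 1| <= `|e|.
Proof.
move=> he s.
have ha : 0 <= 1 + e.
  have := ler_norm (- e); rewrite normrN. lra.
have ss : s * s = 1 + e by rewrite /s -expr2 sqr_sqrtr.
have s0 : 0 <= s by rewrite /s sqrtr_ge0.
have eb : -(1/4) <= e <= 1/4 by rewrite -ler_norml.
case/andP: eb => e1 e2.
have s12 : 1/2 <= s by nra.
split=> //; split=> //.
have -> : e = (s - 1) * (s + 1) by rewrite mulrDr !mulrBl; lra.
rewrite normrM ler_peMr ?normr_ge0 //.
rewrite ger0_norm; lra.
Qed.

Lemma chol (R : rcfType) n : forall (E : 'M[R]_n) (eps : R),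
  0 <= eps -> eps * 2 ^+ n.+1 <= 1 -> E^T = E -> (forall i j, `|E i j| <= eps) ->
  exists L : 'M[R]_n, L *m L^T = 1%:M + E /\ 0 < \det L /\
    forall i j, `|L i j - (i == j)%:R| <= eps * 2 ^+ n.+1.
Proof.
elim: n => [|n IH] E eps e0 en Es Eb.
  exists 1%:M; split; first by apply/matrixP => -[].
  by split; [rewrite det1 ltr01 | move=> -[]].
have p2 : 4 <= 2 ^+ n.+2 :> R.
  have h : 1 <= 2 ^+ n :> R by rewrite exprn_ege1 // ler1n.
  rewrite !exprS; nra.
have e4 : eps <= 1/4.
  have : eps * 4 <= 1 by apply: le_trans en; exact: ler_wpM2l.
  lra.
pose E' : 'M_(1 + n) := E.
have Eb' : forall i j : 'I_(1 + n), `|E' i j| <= eps := Eb.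
have Es' : E'^T = E' := Es.
have EE : E = E' by []. clearbody E'. rewrite EE. clear EE Eb Es.
pose e : R := ulsubmx E' 0 0.
pose b := dlsubmx E'.
pose F := drsubmx E'.
have he : `|e| <= 1/4.
  rewrite /e !mxE. apply: le_trans e4. exact: Eb'.
have [ss [s12 s1]] := sqrt_facts he.
have he' : `|e| <= eps by rewrite /e !mxE; apply: Eb'.
set s := Num.sqrt (1 + e) in ss s12 s1.
have sn0 : s != 0 by apply/eqP => h; rewrite h in s12; lra.
pose E2 := F - (1 + e)^-1 *: (b *m b^T).
have a34 : 3/4 <= 1 + e.
  have := ler_norm (- e); rewrite normrN. lra.
have E2s : E2^T = E2.
  rewrite /E2 linearB /= linearZ /= trmx_mul trmxK /F trmx_drsub.
  by rewrite Es'.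
have cpos : 0 < (1 + e)^-1 by rewrite invr_gt0; lra.
have c2 : (1 + e)^-1 <= 2.
  have : (1 + e)^-1 * (1 + e) = 1 by rewrite mulVf //; apply/eqP => h; rewrite h in a34; lra.
  nra.
have E2b : forall i j, `|E2 i j| <= eps * 2.
  move=> i j; rewrite /E2 !mxE big_ord1 !mxE.
  set x := E' _ _; set y := E' _ _; set z := E' _ _.
  have h1 : `|x| <= eps by apply: Eb'.
  have h2 : `|y| <= eps by apply: Eb'.
  have h3 : `|z| <= eps by apply: Eb'.
  have h4 : `|y| * `|z| <= eps * eps by apply: ler_pM.
  apply: le_trans (ler_normB _ _) _.
  rewrite normrM normrM (gtr0_norm cpos).
  have := normr_ge0 y; have := normr_ge0 z; nra.
have en2 : eps * 2 * 2 ^+ n.+1 <= 1 by rewrite -mulrA -exprS.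
have [L' [L'e [L'd L'b]]] := IH E2 (eps * 2) (mulr_ge0 e0 (ler0n _ 2)) en2 E2s E2b.
pose L : 'M[R]_(1 + n) := block_mx (s%:M : 'M_1) 0 (s^-1 *: b) L'.
have Le : L *m L^T = 1%:M + E'.
  rewrite /L tr_block_mx mulmx_block -[E' in RHS]submxK scalar_mx_block add_block_mx.
  congr block_mx.
  - rewrite tr_scalar_mx mul0mx addr0 -scalar_mxM ss raddfD /=.
    by congr (_ + _); apply/matrixP => i j; rewrite !ord1 !mxE /= mulr1n /e !mxE.
  - rewrite mul0mx addr0 add0r mul_scalar_mx linearZ /= scalerA mulfV // scale1r.
    by rewrite /b trmx_dlsub Es'.
  - by rewrite tr_scalar_mx mul_mx_scalar trmx0 mulmx0 addr0 add0r scalerA mulfV // scale1r.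
  - rewrite L'e /E2 linearZ /= -scalemxAl -scalemxAr scalerA -invfM ss.
    by rewrite addrC -addrA subrK.
have s0 : 0 < s by lra.
have eb : eps * 2 <= eps * 2 ^+ n.+2 by apply: ler_wpM2l => //; lra.
exists L; split; first exact: Le.
split.
  change (0 < @determinant R (1 + n) L).
  by rewrite /L det_lblock det_scalar1 mulr_gt0.
suff HL : forall i j : 'I_(1 + n), `|L i j - (i == j)%:R| <= eps * 2 ^+ n.+2 by exact: HL.
move=> i j.
case: (@split_ordP 1 n i) => i' ->; case: (@split_ordP 1 n j) => j' ->.
- rewrite /L block_mxEul eq_lshift !ord1 mxE eqxx mulr1n.
  apply: le_trans s1 _; apply: le_trans he' _. lra.
- rewrite /L block_mxEur eq_lrshift mxE subr0 normr0.
  apply: mulr_ge0 => //; exact: exprn_ge0.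
- rewrite /L block_mxEdl eq_rlshift (ord1 j') [X in `|X - _|]mxE subr0 normrM.
  have hb : `|b i' 0| <= eps by rewrite /b !mxE; apply: Eb'.
  have hs : `|s^-1| <= 2.
    rewrite normfV gtr0_norm //.
    have : s^-1 * s = 1 by rewrite mulVf.
    have : 0 < s^-1 by rewrite invr_gt0.
    nra.
  apply: le_trans eb.
  have := normr_ge0 (s^-1); have := normr_ge0 (b i' 0); nra.
- rewrite /L block_mxEdr eq_rshift.
  by apply: le_trans (L'b i' j') _; rewrite -mulrA -exprS.
Qed.

Lemma orth_near (R : rcfType) n (X E : 'M[R]_n) eps :
  0 <= eps -> eps * 2 ^+ n.+1 <= 1 -> E^T = E -> (forall i j, `|E i j| <= eps) ->
  X^T *m X = 1%:M + E -> 0 < \det X ->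
  exists U : 'M[R]_n, U *m U^T = 1%:M /\ \det U = 1 /\
    forall i j, `|X i j - U i j| <= n%:R * (eps * 2 ^+ n.+1).
Proof.
move=> e0 en Es Eb XtX dX.
have [L [Le [Ld Lb]]] := chol e0 en Es Eb.
have Lu : L \in unitmx by rewrite unitmxE unitfE lt0r_neq0.
have Ltu : L^T \in unitmx by rewrite unitmxE det_tr unitfE lt0r_neq0.
pose U := X *m invmx L^T.
have UtU : U^T *m U = 1%:M.
  rewrite /U trmx_mul trmx_inv trmxK mulmxA -(mulmxA (invmx L)) XtX -Le.
  by rewrite mulmxA mulVmx // mul1mx mulmxV.
have UUt : U *m U^T = 1%:M by apply: mulmx1C.
have XU : X = U *m L^T by rewrite /U -mulmxA mulVmx // mulmx1.
exists U; split => //; split.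
  have dU : 0 < \det U.
    by rewrite /U det_mulmx det_inv det_tr mulr_gt0 // invr_gt0.
  have : \det U * \det U = 1 by rewrite -{2}(det_tr U) -det_mulmx UUt det1.
  move=> h; move: dU h; set d := \det U => dU h.
  have h0 : (d - 1) * (d + 1) = 0.
    have -> : (d - 1) * (d + 1) = d * d - 1 by ring.
    by rewrite h subrr.
  move/eqP: h0; rewrite mulf_eq0 => /orP[|]; first by rewrite subr_eq0 => /eqP.
  rewrite addr_eq0 => /eqP h3; rewrite h3 in dU; by rewrite ltr0N1 in dU.
have Ub : forall i k, `|U i k| <= 1.
  move=> i k.
  have : \sum_l U l k ^+ 2 = 1.
    have := congr1 (fun M : 'M[R]_n => M k k) UtU; rewrite !mxE eqxx /= mulr1n => <-.
    by apply: eq_bigr => l _; rewrite !mxE expr2.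
  move=> hs; have : U i k ^+ 2 <= 1.
    rewrite -hs (bigD1 i) //= lerDl; apply: sumr_ge0 => l _; exact: sqr_ge0.
  rewrite -real_normK ?num_real // => h.
  have := normr_ge0 (U i k). rewrite expr2 in h. nra.
move=> i j.
have -> : X i j - U i j = (U *m (L^T - 1%:M)) i j.
  by rewrite mulmxBr mulmx1 -XU !mxE.
rewrite mxE; apply: le_trans (ler_norm_sum _ _ _) _.
have : \sum_k `|U i k * (L^T - 1%:M) k j| <= \sum_(k < n) eps * 2 ^+ n.+1.
  apply: ler_sum => k _; rewrite normrM -[X in _ <= X]mul1r.
  apply: ler_pM; [exact: normr_ge0 | exact: normr_ge0 | exact: Ub |].
  by rewrite !mxE eq_sym; exact: Lb.
by rewrite sumr_const card_ord mulr_natl.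
Qed.

Section Norms.
Variable R : realType.

Lemma sqrt_le (x y : R) : 0 <= y -> x <= y ^+ 2 -> Num.sqrt x <= y.
Proof. move=> y0 h; rewrite -(ger0_norm y0) -sqrtr_sqr; exact: ler_wsqrtr. Qed.

Lemma le_sqrt (x y : R) : 0 <= x -> Num.sqrt x <= y -> x <= y ^+ 2.
Proof.
move=> x0 h; have s0 := sqrtr_ge0 x; have sx := sqr_sqrtr x0.
rewrite -sx; rewrite !expr2; nra.
Qed.

Lemma sq_le (w B : R) : `|w| <= B -> w ^+ 2 <= B ^+ 2.
Proof.
move=> h; rewrite -real_normK ?num_real //.
have := normr_ge0 w; rewrite !expr2; nra.
Qed.

Lemma le_sq (w B : R) : 0 <= B -> w ^+ 2 <= B ^+ 2 -> `|w| <= B.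
Proof. by move=> B0 h; rewrite -sqrtr_sqr; apply: sqrt_le. Qed.

Lemma sumsq_le n (w : 'I_n -> R) B : (forall i, `|w i| <= B) ->
  \sum_i w i ^+ 2 <= n%:R * B ^+ 2.
Proof.
move=> h; have : \sum_i w i ^+ 2 <= \sum_(i < n) B ^+ 2.
  by apply: ler_sum => i _; exact: sq_le.
by rewrite sumr_const card_ord mulr_natl.
Qed.

Lemma sum_ge_term n (w : 'I_n -> R) i : (forall k, 0 <= w k) -> w i <= \sum_k w k.
Proof.
move=> h; rewrite (bigD1 i) //= lerDl; apply: sumr_ge0 => k _; exact: h.
Qed.

Lemma rvnorm_entry n (v : 'cV[R]_n) i : `|v i 0| <= rvnorm v.
Proof.
rewrite /rvnorm -sqrtr_sqr; apply: ler_wsqrtr.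
by rewrite (bigD1 i) //= lerDl; apply: sumr_ge0 => k _; exact: sqr_ge0.
Qed.

Lemma rvnorm_le n (v : 'cV[R]_n) B : 0 <= B -> (forall i, `|v i 0| <= B) ->
  rvnorm v <= n%:R * B.
Proof.
move=> B0 h; apply: sqrt_le; first by rewrite mulr_ge0.
apply: le_trans (@sumsq_le n (fun i => v i 0) B h) _.
rewrite exprMn ler_wpM2r ?sqr_ge0 //.
case: n {v h} => [|n]; first by rewrite expr2 mul0r.
by rewrite expr2 ler_peMl // ler1n.
Qed.

Lemma matvec_le n (A : 'M[R]_n) (v : 'cV[R]_n) M : 0 <= M ->
  (forall i j, `|A i j| <= M) -> rvnorm v <= 1 -> forall i, `|(A *m v) i 0| <= n%:R * M.
Proof.
move=> M0 hA hv i; rewrite mxE.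
apply: le_trans (ler_norm_sum _ _ _) _.
have : \sum_(j < n) `|A i j * v j 0| <= \sum_(j < n) M.
  apply: ler_sum => j _; rewrite normrM -[M]mulr1.
  apply: ler_pM; [exact: normr_ge0 | exact: normr_ge0 | exact: hA |].
  exact: le_trans (rvnorm_entry v j) hv.
by rewrite sumr_const card_ord mulr_natl.
Qed.

Lemma ropnorm_le n (A : 'M[R]_n) M : 0 <= M ->
  (forall i j, `|A i j| <= M) -> ropnorm A <= n%:R * (n%:R * M).
Proof.
move=> M0 hA; rewrite /ropnorm; apply: ge_sup.
  exists (rvnorm (A *m 0)), 0 => //=.
  by rewrite /rvnorm big1 ?sqrtr0 // => i _; rewrite mxE expr2 mul0r.
move=> x [v hv <-]; apply: rvnorm_le; first by rewrite mulr_ge0.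
exact: matvec_le.
Qed.

Lemma ropnorm_entry n (A : 'M[R]_n) i j : `|A i j| <= ropnorm A.
Proof.
have M0 : 0 <= \sum_i \sum_j `|A i j|.
  by apply: sumr_ge0 => i' _; apply: sumr_ge0 => j' _; exact: normr_ge0.
have hA : forall i j, `|A i j| <= \sum_i \sum_j `|A i j|.
  move=> i' j'; rewrite (bigD1 i') //= (bigD1 j') //= -addrA lerDl.
  apply: addr_ge0; first by apply: sumr_ge0 => ? _; exact: normr_ge0.
  by apply: sumr_ge0 => ? _; apply: sumr_ge0 => ? _; exact: normr_ge0.
have hs : has_sup [set rvnorm (A *m v) | v in [set v : 'cV[R]_n | rvnorm v <= 1]].
  split.
    exists (rvnorm (A *m 0)), 0 => //=.
    by rewrite /rvnorm big1 ?sqrtr0 // => i' _; rewrite mxE expr2 mul0r.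
  exists (n%:R * (n%:R * \sum_i \sum_j `|A i j|)).
  move=> x [v hv <-]; apply: rvnorm_le; first by rewrite mulr_ge0.
  exact: matvec_le.
apply: le_trans (sup_upper_bound hs _); last first.
  exists (delta_mx j 0) => //=.
  rewrite /rvnorm (bigD1 j) //= big1 ?addr0 ?mxE ?eqxx ?expr1n ?sqrtr1 //.
  by move=> k /negbTE hk; rewrite mxE hk /= expr2 mul0r.
have -> : A i j = (A *m (delta_mx j 0 : 'cV_n)) i 0.
  rewrite mxE (bigD1 j) //= !mxE !eqxx mulr1 big1 ?addr0 // => k /negbTE hk.
  by rewrite !mxE hk mulr0.
exact: rvnorm_entry.
Qed.


Local Open Scope complex_scope.

Lemma normC_le (z : R[i]) (B : R) : (`|z| <= B%:C) = (Num.sqrt (complex.Re z ^+ 2 + complex.Im z ^+ 2) <= B).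
Proof. by rewrite normc_def lecR. Qed.

Lemma cvnorm_entry n (v : 'cV[R[i]]_n) i : `|v i 0| <= (cvnorm v)%:C.
Proof.
rewrite normC_le /cvnorm; apply: ler_wsqrtr.
rewrite (bigD1 i) //= lerDl; apply: sumr_ge0 => k _.
by apply: addr_ge0; exact: sqr_ge0.
Qed.

Lemma cvnorm_le n (v : 'cV[R[i]]_n) B : 0 <= B -> (forall i, `|v i 0| <= B%:C) ->
  cvnorm v <= n%:R * B.
Proof.
move=> B0 h; apply: sqrt_le; first by rewrite mulr_ge0.
have : \sum_i (complex.Re (v i 0) ^+ 2 + complex.Im (v i 0) ^+ 2) <= \sum_(i < n) B ^+ 2.
  apply: ler_sum => i _; apply: le_sqrt; last by rewrite -normC_le.
  by apply: addr_ge0; exact: sqr_ge0.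
rewrite sumr_const card_ord => h2; apply: le_trans h2 _.
rewrite -[B ^+ 2 *+ n]mulr_natl exprMn; apply: ler_wpM2r; first exact: sqr_ge0.
case: n {v h} => [|n]; first by rewrite expr2 mul0r.
by rewrite expr2 ler_peMl // ler1n.
Qed.

Lemma cmatvec_le n (A : 'M[R[i]]_n) (v : 'cV[R[i]]_n) M : 0 <= M ->
  (forall i j, `|A i j| <= M%:C) -> cvnorm v <= 1 ->
  forall i, `|(A *m v) i 0| <= (n%:R * M)%:C.
Proof.
move=> M0 hA hv i; rewrite mxE.
apply: le_trans (ler_norm_sum _ _ _) _.
have : \sum_(j < n) `|A i j * v j 0| <= \sum_(j < n) M%:C.
  apply: ler_sum => j _; rewrite normrM -[M%:C]mulr1.
  apply: ler_pM; [exact: normr_ge0 | exact: normr_ge0 | exact: hA |].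
  apply: le_trans (cvnorm_entry v j) _.
  by rewrite -(@rmorph1 _ _ (real_complex R)) lecR.
by rewrite sumr_const card_ord rmorphM /= rmorph_nat mulr_natl.
Qed.

Lemma copnorm_le n (A : 'M[R[i]]_n) M : 0 <= M ->
  (forall i j, `|A i j| <= M%:C) -> copnorm A <= n%:R * (n%:R * M).
Proof.
move=> M0 hA; rewrite /copnorm; apply: ge_sup.
  exists (cvnorm (A *m 0)), 0 => //=.
  rewrite /cvnorm big1 ?sqrtr0 ?ler01 // => i _; rewrite mxE.
  have -> : complex.Re (0 : R[i]) = 0 by [].
  have -> : complex.Im (0 : R[i]) = 0 by [].
  by rewrite expr2 mul0r addr0.
move=> x [v hv <-]; apply: cvnorm_le; first by rewrite mulr_ge0.
exact: cmatvec_le.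
Qed.

End Norms.

Section Det.
Variable R : realType.
Local Open Scope complex_scope.

Lemma prod_le k (a : 'I_k -> R[i]) (A : R) : 0 <= A -> (forall i, `|a i| <= A%:C) ->
  `|\prod_i a i| <= (A ^+ k)%:C.
Proof.
move=> A0 ha; rewrite normr_prod.
have : \prod_i `|a i| <= \prod_(i < k) A%:C.
  by apply: ler_prod => i _; rewrite normr_ge0 ha.
by rewrite prodr_const card_ord rmorphXn.
Qed.

Lemma prod_pert k : forall (a b : 'I_k -> R[i]) (A B : R), 0 <= A -> 0 <= B -> 1 <= A + B ->
  (forall i, `|a i| <= A%:C) -> (forall i, `|b i| <= B%:C) ->
  `|\prod_i (a i + b i) - \prod_i a i| <= (k%:R * B * (A + B) ^+ k)%:C.
Proof.
elim: k => [|k IH] a b A B A0 B0 AB ha hb.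
  by rewrite !big_ord0 subrr normr0 mul0r mul0r.
rewrite !big_ord_recl.
set P := \prod_(i < k) _; set P0 := \prod_(i < k) _.
have -> : (a ord0 + b ord0) * P - a ord0 * P0 = (a ord0 + b ord0) * (P - P0) + b ord0 * P0.
  by ring.
have h1 := @IH (fun i => a (lift ord0 i)) (fun i => b (lift ord0 i)) A B A0 B0 AB
   (fun i => ha _) (fun i => hb _).
have h2 := @prod_le k (fun i => a (lift ord0 i)) A A0 (fun i => ha _).
have h3 : `|a ord0 + b ord0| <= (A + B)%:C.
  by apply: le_trans (ler_normD _ _) _; rewrite rmorphD lerD.
apply: le_trans (ler_normD _ _) _; rewrite !normrM.
have h4 : `|a ord0 + b ord0| * `|P - P0| + `|b ord0| * `|P0| <=
   (A + B)%:C * (k%:R * B * (A + B) ^+ k)%:C + B%:C * (A ^+ k)%:C.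
  apply: lerD; apply: ler_pM => //; exact: normr_ge0.
apply: le_trans h4 _.
rewrite -!rmorphM -rmorphD lecR.
have hAk : A ^+ k <= (A + B) ^+ k by apply: lerXn2r => //; rewrite ?nnegrE; lra.
have hk0 : 0 <= (A + B) ^+ k by apply: exprn_ge0; lra.
have hk : (A + B) ^+ k <= (A + B) ^+ k.+1 by rewrite exprS; nra.
have e1 := ler_wpM2l B0 hAk.
have e2 := ler_wpM2l B0 hk.
rewrite exprS in e2 *; rewrite -natr1.
set t := (A + B) ^+ k in e1 e2 *; set u := A ^+ k in e1 *.
set kk : R := k%:R.
have -> : (kk + 1) * B * ((A + B) * t) = (A + B) * (kk * B * t) + B * ((A + B) * t) by ring.
lra.
Qed.


Lemma det_pert n (X Y : 'M[R[i]]_n) (A B : R) : 0 <= A -> 0 <= B -> 1 <= A + B ->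
  (forall i j, `|X i j| <= A%:C) -> (forall i j, `|Y i j| <= B%:C) ->
  `|\det (X + Y) - \det X| <= (n`!%:R * (n%:R * B * (A + B) ^+ n))%:C.
Proof.
move=> A0 B0 AB hX hY.
rewrite /determinant -sumrB.
apply: le_trans (ler_norm_sum _ _ _) _.
have : \sum_(s : 'S_n) `|(-1) ^+ s * \prod_i (X + Y) i (s i) - (-1) ^+ s * \prod_i X i (s i)|
   <= \sum_(s : 'S_n) (n%:R * B * (A + B) ^+ n)%:C.
  apply: ler_sum => s _.
  rewrite -mulrBr normrM normrX normrN1 expr1n mul1r.
  under eq_bigr do rewrite mxE.
  exact: (@prod_pert n (fun i => X i (s i)) (fun i => Y i (s i)) A B).
move=> h; apply: le_trans h _.
by rewrite sumr_const card_Sn -rmorphMn lecR -mulr_natl.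
Qed.

End Det.

Section Alg.
Lemma col_id (R : realType) n (X Y : 'M[R]_n) j : X^T *m X = 1%:M + Y^T *m Y ->
  \sum_k X k j ^+ 2 = 1 + \sum_k Y k j ^+ 2.
Proof.
move=> h; transitivity ((X^T *m X) j j).
  by rewrite mxE; apply: eq_bigr => k _; rewrite mxE expr2.
rewrite h !mxE eqxx mulr1n; congr (_ + _); apply: eq_bigr => k _; by rewrite mxE expr2.
Qed.

Variable R : realType.
Local Open Scope complex_scope.

Lemma ReD (z w : R[i]) : complex.Re (z + w) = complex.Re z + complex.Re w.
Proof. by case: z; case: w. Qed.
Lemma Re0 : complex.Re (0 : R[i]) = 0. Proof. by []. Qed.
Lemma ReM (z w : R[i]) : complex.Re (z * w) =
  complex.Re z * complex.Re w - complex.Im z * complex.Im w.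
Proof. by case: z => a b; case: w => c d. Qed.
Lemma Re_sum n (f : 'I_n -> R[i]) : complex.Re (\sum_k f k) = \sum_k complex.Re (f k).
Proof. exact: (big_morph _ ReD Re0). Qed.
Lemma Re_b (b : bool) : complex.Re (b%:R : R[i]) = b%:R.
Proof. by case: b. Qed.

Lemma entryQ n (Q : 'M[R[i]]_n) i j :
  Q i j = (mxRe Q i j)%:C + 'i * (mxIm Q i j)%:C.
Proof. by rewrite !mxE -complexE. Qed.

Lemma XtX n (Q : 'M[R[i]]_n) : Q^T *m Q = 1%:M ->
  (mxRe Q)^T *m mxRe Q = 1%:M + (mxIm Q)^T *m mxIm Q.
Proof.
move=> h; apply/matrixP => i j.
have := congr1 (fun M : 'M[R[i]]_n => complex.Re (M i j)) h.
rewrite /= !mxE Re_sum Re_b => <-.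
rewrite -big_split /=.
apply: eq_bigr => k _; rewrite !mxE ReM; ring.
Qed.

Lemma normC_real (r : R) : `|r%:C| = (`|r|)%:C.
Proof. by rewrite normc_def /= expr0n addr0 sqrtr_sqr. Qed.

Lemma norm_i : `|'i : R[i]| = 1.
Proof. by rewrite normc_def /= expr0n add0r expr1n sqrtr1. Qed.

End Alg.

Lemma consts (R : realFieldType) (N P F G d : R) :
  1 <= N -> 1 <= P -> 1 <= F -> 1 <= G -> 0 < d ->
  d * (8 * N ^+ 5 * P * F * G) < 1 ->
  [/\ d <= 1, N ^+ 5 * d ^+ 2 <= 1/2, N * (2 * N ^+ 2 * d) ^+ 2 * P <= 1 &
      F * (N * (2 * N ^+ 2 * d) * G) < 1].
Proof.
move=> N1 P1 F1 G1 d0 hd.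
have N2 : 1 <= N ^+ 2 by rewrite exprn_ege1.
have N3 : 1 <= N ^+ 3 by rewrite exprn_ege1.
have N35 : N ^+ 3 <= N ^+ 5.
  have -> : N ^+ 5 = N ^+ 3 * N ^+ 2 by rewrite -exprD.
  nra.
set S := N ^+ 5 * P.
have S1 : N ^+ 5 <= S by rewrite /S; nra.
set T := F * G.
have T1 : 1 <= T by rewrite /T; nra.
have hK : d * (8 * N ^+ 5 * P * F * G) = 8 * (d * S) * T by rewrite /S /T; ring.
rewrite hK in hd.
have dS0 : 0 <= d * S by apply: mulr_ge0; lra.
have hdS : 8 * (d * S) < 1 by nra.
have d1 : d <= 1 by nra.
have dd : d ^+ 2 <= d by rewrite expr2; nra.
split => //.
- have : N ^+ 5 * d ^+ 2 <= N ^+ 5 * d by apply: ler_wpM2l => //; lra.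
  nra.
- have -> : N * (2 * N ^+ 2 * d) ^+ 2 * P = 4 * S * d ^+ 2 by rewrite /S; ring.
  have : S * d ^+ 2 <= S * d by apply: ler_wpM2l => //; lra.
  nra.
- have -> : F * (N * (2 * N ^+ 2 * d) * G) = 2 * N ^+ 3 * T * d by rewrite /T; ring.
  have : 2 * N ^+ 3 * d <= 8 * (d * S) by nra.
  have : 0 <= 2 * N ^+ 3 * d by nra.
  nra.
Qed.

Unset Implicit Arguments.
Local Open Scope complex_scope.

Theorem lemma8p1 (R : realType) (n : nat) (hn : (1 <= n)%N) :
  exists C : R, 0 < C /\
  exists delta0 : R, 0 < delta0 /\
  forall delta : R, 0 < delta -> delta < delta0 ->
  forall Q : 'M[R[i]]_n, SOC Q -> Mdelta delta Q ->
  exists U : 'M[R]_n, SOR U /\ copnorm (Q - mxC U) < C * delta.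
Proof.
pose N : R := n%:R.
have N1 : 1 <= N by rewrite /N ler1n.
pose P : R := 2 ^+ n.+1.
have P1 : 1 <= P by rewrite /P exprn_ege1 // ler1n.
pose F : R := n`!%:R.
have F1 : 1 <= F by rewrite /F ler1n fact_gt0.
have N2 : 1 <= N ^+ 2 by rewrite exprn_ege1.
pose G : R := (4 * N ^+ 2) ^+ n.
have G1 : 1 <= G by rewrite /G exprn_ege1 //; lra.
pose K := 8 * N ^+ 5 * P * F * G.
have K0 : 0 < K.
  rewrite /K !mulr_gt0 //; try lra; by rewrite exprn_gt0 //; lra.
have N8 : 0 <= N ^+ 8 by rewrite exprn_ge0 //; lra.
have N4 : 0 <= N ^+ 4 by rewrite exprn_ge0 //; lra.
exists (4 * N ^+ 8 * P + 2 * N ^+ 4 + 1); split.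
  have : 0 <= N ^+ 8 * P by rewrite mulr_ge0 //; lra.
  lra.
exists K^-1; split; first by rewrite invr_gt0.
move=> d d0 dK Q [QQt dQ] hM.
have hd : d * K < 1.
  have : d * K < K^-1 * K by rewrite ltr_pM2r.
  by rewrite mulVf ?gt_eqF.
have [d1 hA hB hC] := consts N1 P1 F1 G1 d0 hd.
have QtQ : Q^T *m Q = 1%:M := mulmx1C QQt.
have hXX := XtX QtQ.
move: hM; rewrite /Mdelta /= => hM.
set X := mxRe Q in hXX hM *; set Y := mxIm Q in hXX hM *.
set rho := ropnorm X in hM.
have i0 : 'I_n := Ordinal hn.
have rho0 : 0 <= rho := le_trans (normr_ge0 _) (ropnorm_entry X i0 i0).
have hY : forall i j, `|Y i j| <= d * rho.
  by move=> i j; apply: ltW (le_lt_trans (ropnorm_entry Y i j) hM).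
have hXcol : forall i j, X i j ^+ 2 <= 1 + N * (d * rho) ^+ 2.
  move=> i j.
  have e1 := col_id j hXX.
  have : X i j ^+ 2 <= \sum_k X k j ^+ 2.
    rewrite (bigD1 i) //= lerDl; apply: sumr_ge0 => k _; exact: sqr_ge0.
  rewrite e1 => h; apply: le_trans h _; rewrite lerD2l.
  exact: (@sumsq_le R n (fun k => Y k j) (d * rho) (fun k => hY k j)).
pose M := Num.sqrt (1 + N * (d * rho) ^+ 2).
have M0 : 0 <= M := sqrtr_ge0 _.
have hX : forall i j, `|X i j| <= M.
  by move=> i j; rewrite -sqrtr_sqr; apply: ler_wsqrtr; exact: hXcol.
have hrho : rho <= N * (N * M) := ropnorm_le M0 hX.
have M2 : M ^+ 2 = 1 + N * (d * rho) ^+ 2.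
  rewrite /M sqr_sqrtr //; apply: addr_ge0; first lra.
  by apply: mulr_ge0; [lra | exact: sqr_ge0].
have rho2 : rho <= 2 * N ^+ 2.
  have r2 : rho ^+ 2 <= (N * (N * M)) ^+ 2 by apply: sq_le; rewrite ger0_norm.
  have e : (N * (N * M)) ^+ 2 = N ^+ 4 + (N ^+ 5 * d ^+ 2) * rho ^+ 2.
    by rewrite !exprMn M2; ring.
  have : (N ^+ 5 * d ^+ 2) * rho ^+ 2 <= 1/2 * rho ^+ 2.
    by apply: ler_wpM2r => //; exact: sqr_ge0.
  move=> h; rewrite -[rho]ger0_norm //; apply: le_sq.
    by apply: mulr_ge0; lra.
  have -> : (2 * N ^+ 2) ^+ 2 = 4 * N ^+ 4 by ring.
  lra.
pose y0 := 2 * N ^+ 2 * d.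
have y00 : 0 <= y0 by rewrite /y0 mulr_ge0 //; [apply: mulr_ge0 | ]; lra.
have Yb : forall i j, `|Y i j| <= y0.
  move=> i j; apply: le_trans (hY i j) _; rewrite /y0 mulrC ler_wpM2r //; lra.
have Xb : forall i j, `|X i j| <= 2 * N ^+ 2.
  by move=> i j; apply: le_trans (ropnorm_entry X i j) rho2.
pose E := Y^T *m Y.
have Es : E^T = E by rewrite /E trmx_mul trmxK.
pose eps := N * y0 ^+ 2.
have e0 : 0 <= eps by rewrite /eps mulr_ge0 ?sqr_ge0 //; lra.
have Eb : forall i j, `|E i j| <= eps.
  move=> i j; rewrite /E mxE; apply: le_trans (ler_norm_sum _ _ _) _.
  have : \sum_k `|Y^T i k * Y k j| <= \sum_(k < n) y0 ^+ 2.
    apply: ler_sum => k _; rewrite normrM mxE expr2.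
    by apply: ler_pM; [exact: normr_ge0 | exact: normr_ge0 | exact: Yb | exact: Yb].
  by rewrite sumr_const card_ord -mulr_natl.
have en : eps * 2 ^+ n.+1 <= 1 by exact: hB.
have dX : 0 < \det X.
  have QXY : Q = mxC X + 'i%C *: mxC Y.
    by apply/matrixP => i j; rewrite !mxE -complexE.
  have hp := @det_pert R n (mxC X) ('i%C *: mxC Y) (2 * N ^+ 2) y0.
  have A0 : 0 <= 2 * N ^+ 2 by lra.
  have AB : 1 <= 2 * N ^+ 2 + y0 by lra.
  have hXC : forall i j, `|mxC X i j| <= (2 * N ^+ 2)%:C.
    move=> i j; have -> : mxC X i j = (X i j)%:C by rewrite !mxE.
    by rewrite normC_real lecR.
  have hYC : forall i j, `|('i%C *: mxC Y) i j| <= y0%:C.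
    move=> i j; have -> : ('i%C *: mxC Y) i j = 'i%C * (Y i j)%:C by rewrite !mxE.
    by rewrite normrM norm_i mul1r normC_real lecR.
  have {hp} hp := hp A0 y00 AB hXC hYC.
  rewrite -QXY dQ in hp.
  have dC : \det (mxC X) = (\det X)%:C := det_map_mx (real_complex R) X.
  rewrite dC -(@rmorph1 _ _ (real_complex R)) -rmorphB normC_real lecR in hp.
  have hG : (2 * N ^+ 2 + y0) ^+ n <= G.
    rewrite /G; apply: lerXn2r; rewrite ?nnegrE; try lra.
    have : y0 <= 2 * N ^+ 2 by rewrite /y0 ler_piMr //; lra.
    lra.
  have hb : F * (N * y0 * (2 * N ^+ 2 + y0) ^+ n) < 1.
    apply: le_lt_trans hC; apply: ler_wpM2l; first lra.
    apply: ler_wpM2l => //; apply: mulr_ge0 => //; lra.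
  have h1 := ler_norm (1 - \det X).
  rewrite /F in hb; lra.
have [U [UUt [dU hXU]]] := orth_near e0 en Es Eb hXX dX.
exists U; split; first by split.
have hQU : forall i j, `|(Q - mxC U) i j| <= (N * (eps * 2 ^+ n.+1) + y0)%:C.
  move=> i j.
  have -> : (Q - mxC U) i j = (X i j - U i j)%:C + 'i%C * (Y i j)%:C.
    rewrite !mxE rmorphB /=; set z := Q i j; rewrite {1}(complexE z); ring.
  apply: le_trans (ler_normD _ _) _.
  rewrite normrM norm_i mul1r !normC_real rmorphD lerD // lecR //.
have B0 : 0 <= N * (eps * 2 ^+ n.+1) + y0.
  apply: addr_ge0 => //; apply: mulr_ge0; first lra.
  by apply: mulr_ge0 => //; apply: exprn_ge0.
apply: le_lt_trans (copnorm_le B0 hQU) _.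
rewrite /eps /y0.
have dd : d ^+ 2 <= d by rewrite expr2; nra.
have -> : N * (N * (N * (N * (2 * N ^+ 2 * d) ^+ 2 * 2 ^+ n.+1) + 2 * N ^+ 2 * d))
   = 4 * (N ^+ 8 * P) * d ^+ 2 + 2 * N ^+ 4 * d.
  by rewrite /P; ring.
have S0 : 0 <= N ^+ 8 * P by rewrite mulr_ge0 //; lra.
have : (N ^+ 8 * P) * d ^+ 2 <= (N ^+ 8 * P) * d by apply: ler_wpM2l.
nra.
Qed.
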